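(* Let $L$ be any infinite regular language over an alphabet $\Sigma$ with $|\Sigma|\geq 2$. Then there exists a positive integer $m$ such that the following holds: for any integer $n\geq 1$ and any subset $S\subseteq L\cap\Sigma^n$ with $|S|>m$, and for any integer $i\in\{0,1,\ldots,n\}$, there exist two strings $x=x_1x_2$ and $y=y_1y_2$ in $S$ with $|x_1|=|y_1|=i$ and $|x_2|=|y_2|$ such that (i) $x\neq y$, (ii) $y_1x_2\in L$, and (iii) $x_1y_2\in L$.
   Context: $\Sigma^n$ denotes the set of all strings of length exactly $n$ over $\Sigma$; $|w|$ denotes the length of a string $w$. *)

(* Defs.v *)
From mathcomp Require Import all_boot.
Set Implicit Arguments. Unset Strict Implicit. Unset Printing Implicit Defensive.

Record dfa (Sigma : finType) := DFA {
  dfa_state : finType;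
  dfa_start : dfa_state;
  dfa_delta : dfa_state -> Sigma -> dfa_state;
  dfa_final : {set dfa_state} }.

Definition dfa_accepts (Sigma : finType) (A : dfa Sigma) (w : seq Sigma) : bool :=
  foldl (@dfa_delta Sigma A) (dfa_start A) w \in dfa_final A.

Definition regular (Sigma : finType) (L : pred (seq Sigma)) : Prop :=
  exists A : dfa Sigma, forall w, L w = dfa_accepts A w.

Definition infinite_lang (Sigma : finType) (L : pred (seq Sigma)) : Prop :=
  ~ exists s : seq (seq Sigma), forall w, L w -> w \in s.

(* Main.v *)
Require Import Defs.
From mathcomp Require Import all_boot.

Theorem lemma3p1 (Sigma : finType) (L : pred (seq Sigma)) :
  2 <= #|Sigma| -> regular L -> infinite_lang L ->
  exists m : nat, 0 < m /\
    forall (n : nat) (S : {set n.-tuple Sigma}),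
      1 <= n -> (forall x, x \in S -> L (val x)) -> m < #|S| ->
      forall i : nat, i <= n ->
        exists x y : n.-tuple Sigma,
          [/\ x \in S, y \in S, x != y,
              L (take i (val y) ++ drop i (val x)) &
              L (take i (val x) ++ drop i (val y))].
Proof.
move=> _ [A HA] _.
exists #|dfa_state A|; split.
  by apply/card_gt0P; exists (dfa_start A).
move=> n S _ HS Hm i _.
pose f (x : n.-tuple Sigma) := foldl (@dfa_delta _ A) (dfa_start A) (take i (val x)).
case: (boolP [exists x in S, exists y in S, (x != y) && (f x == f y)]).
  move=> /exists_inP [x xS /exists_inP [y yS /andP [nxy /eqP fxy]]].
  exists x, y; split => //.
    move: (HS x xS); rewrite !HA /dfa_accepts !foldl_cat.
    by rewrite -{1}(cat_take_drop i (val x)) foldl_cat -/(f x) -/(f y) fxy.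
  move: (HS y yS); rewrite !HA /dfa_accepts !foldl_cat.
  by rewrite -{1}(cat_take_drop i (val y)) foldl_cat -/(f x) -/(f y) fxy.
move=> /exists_inPn H.
have inj : {in S &, injective f}.
  move=> x y xS yS fxy; apply/eqP; apply/negPn/negP => nxy.
  by move: (H x xS) => /exists_inPn /(_ y yS); rewrite nxy fxy eqxx.
have := card_in_imset inj.
move=> E; move: Hm; rewrite -E => Hm.
by move: (max_card (f @: S)); rewrite leqNgt Hm.
Qed.
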